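(* Let $\mathbb C$ be a semi-abelian variety of universal algebras, $A$ an algebra in $\mathbb C$, and $X,Y$ subalgebras of $A$. Then $[X,Y]_{\mathbb C,A}=[X,Y]_{A\mid 1}$.
   Context: A semi-abelian variety is a variety of universal algebras which, as a category, is pointed and Bourn-protomodular (equivalently, a pointed classically ideal determined variety); $0$ denotes its unique constant. A term $t(\mathbf w_1,\dots,\mathbf w_k,\mathbf x_1,\dots,\mathbf x_m,\mathbf y_1,\dots,\mathbf y_n)$ of $\mathbb C$, with $\{\mathbf x_1,\dots,\mathbf x_m\}$ and $\{\mathbf y_1,\dots,\mathbf y_n\}$ disjoint sets of variables, is a commutator term in $(\mathbf x_1,\dots,\mathbf x_m)$ and $(\mathbf y_1,\dots,\mathbf y_n)$ if the identities $t(\mathbf w_1,\dots,\mathbf w_k,0,\dots,0,\mathbf y_1,\dots,\mathbf y_n)=0=t(\mathbf w_1,\dots,\mathbf w_k,\mathbf x_1,\dots,\mathbf x_m,0,\dots,0)$ hold in $\mathbb C$. $[X,Y]_{\mathbb C,A}$ is the set of all elements $t_A(w_1,\dots,w_k,x_1,\dots,x_m,y_1,\dots,y_n)$ of $A$ where $t$ is such a commutator term, $w_i\in A$, $x_i\in X$, $y_i\in Y$. $[X,Y]_{A\mid 1}$ is the image under the homomorphism $[1_A,x,y]\colon A+X+Y\to A$ (with $x,y$ the inclusions) of the kernel (preimage of $0$) of the homomorphism $\langle[\iota_1,\iota_2,0],[\iota_1,0,\iota_2]\rangle\colon A+X+Y\to (A+X)\times_A(A+Y)$, where $\iota_i$ are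 coproduct injections and $(A+X)\times_A(A+Y)$ is the pullback of $[1,0]\colon A+X\to A$ and $[1,0]\colon A+Y\to A$. *)

(* Defs.v *)
Set Implicit Arguments.

Definition fin (n : nat) : Type := {i : nat | i < n}.

Record signature := Signature { op : Type; arity : op -> nat }.

Record algebra (S : signature) := Algebra {
  carrier :> Type;
  interp : forall o : op S, (fin (arity S o) -> carrier) -> carrier }.
Arguments interp {S} a o args : rename.

Inductive term (S : signature) (V : Type) : Type :=
| var : V -> term S V
| app : forall o : op S, (fin (arity S o) -> term S V) -> term S V.
Arguments var {S V} v.
Arguments app {S V} o args.

Fixpoint eval {S : signature} {V : Type} (A : algebra S) (env : V -> A)
  (t : term S V) : A :=
  match t with
  | var v => env v
  | app o args => interp A o (fun i => eval A env (args i))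
  end.

(** A variety is the class of models of a set E of identities
    (in countably many variables). *)
Definition in_variety {S : signature} (E : term S nat -> term S nat -> Prop)
  (A : algebra S) : Prop :=
  forall s t, E s t -> forall env : nat -> A, eval A env s = eval A env t.

Definition hom {S : signature} {A B : algebra S} (f : A -> B) : Prop :=
  forall o (args : fin (arity S o) -> A),
    f (interp A o args) = interp B o (fun i => f (args i)).

Definition empty_env (T : Type) : Empty_set -> T := fun e => match e with end.

Definition zero {S : signature} (c : term S Empty_set) (A : algebra S) : A :=
  eval A (empty_env A) c.

Definition pointed {S : signature} (E : term S nat -> term S nat -> Prop)
  (c : term S Empty_set) : Prop :=
  forall (t : term S Empty_set) (D : algebra S), in_variety E D ->
    eval D (empty_env D) t = eval D (empty_env D) c.

(** (Bourn-)protomodularity of a pointed variety, in the form of the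
    split short five lemma: given a morphism of split extensions
        p : B -> A (section s),  p' : B' -> A' (section s'),
        f : B -> B',  g : A -> A'  with  p' f = g p,  f s = s' g,
    if g is an isomorphism and f restricts to a bijection between the
    kernels of p and p', then f is an isomorphism (bijective homomorphism). *)
Definition protomodular {S : signature} (E : term S nat -> term S nat -> Prop)
  (c : term S Empty_set) : Prop :=
  forall (B A B' A' : algebra S),
    in_variety E B -> in_variety E A -> in_variety E B' -> in_variety E A' ->
  forall (p : B -> A) (s : A -> B) (p' : B' -> A') (s' : A' -> B')
         (f : B -> B') (g : A -> A'),
    hom p -> hom s -> hom p' -> hom s' -> hom f -> hom g ->
    (forall a, p (s a) = a) -> (forall a', p' (s' a') = a') ->
    (forall b, p' (f b) = g (p b)) -> (forall a, f (s a) = s' (g a)) ->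
    (forall a1 a2, g a1 = g a2 -> a1 = a2) -> (forall a', exists a, g a = a') ->
    (forall k1 k2, p k1 = zero c A -> p k2 = zero c A -> f k1 = f k2 -> k1 = k2) ->
    (forall k', p' k' = zero c A' -> exists k, p k = zero c A /\ f k = k') ->
    (forall b1 b2, f b1 = f b2 -> b1 = b2) /\ (forall b', exists b, f b = b').

Definition is_subalgebra {S : signature} (A : algebra S) (X : A -> Prop) : Prop :=
  forall o (args : fin (arity S o) -> A), (forall i, X (args i)) -> X (interp A o args).

Definition subalg {S : signature} (A : algebra S) (X : A -> Prop)
  (HX : is_subalgebra A X) : algebra S :=
  @Algebra S {a : A | X a}
    (fun o args => exist X (interp A o (fun i => proj1_sig (args i)))
                          (HX o _ (fun i => proj2_sig (args i)))).

Definition is_coproduct2 {S : signature} (E : term S nat -> term S nat -> Prop)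
  (A1 A2 Q : algebra S) (q1 : A1 -> Q) (q2 : A2 -> Q) : Prop :=
  in_variety E Q /\ hom q1 /\ hom q2 /\
  forall (D : algebra S), in_variety E D ->
  forall (f1 : A1 -> D) (f2 : A2 -> D), hom f1 -> hom f2 ->
    exists h : Q -> D, hom h /\ (forall x, h (q1 x) = f1 x) /\ (forall x, h (q2 x) = f2 x) /\
      (forall h' : Q -> D, hom h' -> (forall x, h' (q1 x) = f1 x) ->
         (forall x, h' (q2 x) = f2 x) -> forall z, h' z = h z).

Definition is_coproduct3 {S : signature} (E : term S nat -> term S nat -> Prop)
  (A1 A2 A3 Q : algebra S) (q1 : A1 -> Q) (q2 : A2 -> Q) (q3 : A3 -> Q) : Prop :=
  in_variety E Q /\ hom q1 /\ hom q2 /\ hom q3 /\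
  forall (D : algebra S), in_variety E D ->
  forall (f1 : A1 -> D) (f2 : A2 -> D) (f3 : A3 -> D), hom f1 -> hom f2 -> hom f3 ->
    exists h : Q -> D, hom h /\ (forall x, h (q1 x) = f1 x) /\ (forall x, h (q2 x) = f2 x)
      /\ (forall x, h (q3 x) = f3 x) /\
      (forall h' : Q -> D, hom h' -> (forall x, h' (q1 x) = f1 x) ->
         (forall x, h' (q2 x) = f2 x) -> (forall x, h' (q3 x) = f3 x) ->
         forall z, h' z = h z).

(** Commutator terms: t(w_1..w_k, x_1..x_m, y_1..y_n), variables indexed by
    (fin k + fin m) + fin n, such that t(w,0,y) = 0 = t(w,x,0) hold in the variety. *)
Definition env3 {T : Type} {k m n : nat} (ew : fin k -> T) (ex : fin m -> T)
  (ey : fin n -> T) : (fin k + fin m) + fin n -> T :=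
  fun v => match v with
           | inl (inl i) => ew i
           | inl (inr i) => ex i
           | inr i => ey i
           end.

Definition commutator_term {S : signature} (E : term S nat -> term S nat -> Prop)
  (c : term S Empty_set) (k m n : nat) (t : term S ((fin k + fin m) + fin n)) : Prop :=
  forall D : algebra S, in_variety E D ->
    (forall ew ey, eval D (env3 ew (fun _ => zero c D) ey) t = zero c D) /\
    (forall ew ex, eval D (env3 ew ex (fun _ => zero c D)) t = zero c D).

Definition comm_CA {S : signature} (E : term S nat -> term S nat -> Prop)
  (c : term S Empty_set) (A : algebra S) (X Y : A -> Prop) : A -> Prop :=
  fun a => exists (k m n : nat) (t : term S ((fin k + fin m) + fin n)),
    commutator_term E c t /\
    exists (ew : fin k -> A) (ex : fin m -> A) (ey : fin n -> A),
      (forall i, X (ex i)) /\ (forall j, Y (ey j)) /\ a = eval A (env3 ew ex ey) t.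

(* Main.v *)
Require Import Defs.
From Stdlib Require Import FunctionalExtensionality ProofIrrelevance ClassicalEpsilon Classical PropExtensionality Lia.
From Stdlib Require List.

Fixpoint subst {S : signature} {V W : Type} (σ : V -> term S W) (t : term S V) : term S W :=
  match t with var v => σ v | app o args => app o (fun i => subst σ (args i)) end.

Lemma eval_subst {S : signature} {V W : Type} (D : algebra S) (env : W -> D) (σ : V -> term S W) t :
  eval D env (subst σ t) = eval D (fun v => eval D env (σ v)) t.
Proof.
  induction t as [v|o args IH]; simpl; [reflexivity|].
  f_equal. apply functional_extensionality; intro i; apply IH.
Qed.

Lemma eval_ext {S : signature} {V : Type} (D : algebra S) (env1 env2 : V -> D) t :
  (forall v, env1 v = env2 v) -> eval D env1 t = eval D env2 t.
Proof. intro H. replace env2 with env1; [reflexivity|]. apply functional_extensionality; exact H. Qed.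

Lemma eval_hom {S : signature} {V : Type} (D D' : algebra S) (f : D -> D') (env : V -> D) t :
  hom f -> f (eval D env t) = eval D' (fun v => f (env v)) t.
Proof.
  intro Hf. induction t as [v|o args IH]; simpl; [reflexivity|].
  rewrite Hf. f_equal. apply functional_extensionality; intro i; apply IH.
Qed.

Lemma sig_eq {T : Type} (P : T -> Prop) (a b : sig P) : proj1_sig a = proj1_sig b -> a = b.
Proof. destruct a as [a Ha], b as [b Hb]; simpl; intro; subst. f_equal. apply proof_irrelevance. Qed.

Lemma eval_subalg {S : signature} {V : Type} (A : algebra S) (X : A -> Prop) (HX : is_subalgebra A X)
  (env : V -> subalg HX) t :
  proj1_sig (eval (subalg HX) env t) = eval A (fun v => proj1_sig (env v)) t.
Proof.
  induction t as [v|o args IH]; simpl; [reflexivity|].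
  f_equal. apply functional_extensionality; intro i; apply IH.
Qed.

Lemma sub_variety {S : signature} E (A : algebra S) (X : A -> Prop) (HX : is_subalgebra A X) :
  in_variety E A -> in_variety E (subalg HX).
Proof.
  intros HA s t Hst env. apply sig_eq. rewrite !eval_subalg. apply HA; exact Hst.
Qed.

Lemma zero_in_sub {S : signature} (A : algebra S) (X : A -> Prop) (HX : is_subalgebra A X) :
  forall t : term S Empty_set, X (eval A (empty_env A) t).
Proof.
  induction t as [v|o args IH]; [destruct v|]. simpl. apply HX. exact IH.
Qed.

Lemma hom_zero {S : signature} c (D D' : algebra S) (f : D -> D') :
  hom f -> f (zero c D) = zero c D'.
Proof.
  intro Hf. unfold zero. rewrite (eval_hom _ _ f _ _ Hf). apply eval_ext. intros [].
Qed.

Lemma const_zero_hom {S : signature} E c (Hp : pointed E c) (B D : algebra S) :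
  in_variety E D -> hom (fun _ : B => zero c D).
Proof.
  intros HD o args. symmetry. unfold zero.
  change (eval D (empty_env D) (app o (fun _ => c)) = eval D (empty_env D) c).
  apply Hp; exact HD.
Qed.

Definition empty_elim {S : signature} {V : Type} (e : Empty_set) : term S V := match e with end.

Lemma eval_zc {S : signature} {V : Type} c (D : algebra S) (env : V -> D) :
  eval D env (subst empty_elim c) = zero c D.
Proof. rewrite eval_subst. apply eval_ext. intros []. Qed.

Definition teq {S : signature} (E : term S nat -> term S nat -> Prop) {V : Type} (s t : term S V) : Prop :=
  forall D : algebra S, in_variety E D -> forall env : V -> D, eval D env s = eval D env t.

Definition Fcar {S : signature} E (V : Type) := {P : term S V -> Prop | exists t, P = teq E t}.
Definition cls {S : signature} E {V : Type} (t : term S V) : Fcar E V :=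
  exist _ (teq E t) (ex_intro _ t eq_refl).
Definition rep {S : signature} E {V : Type} (x : Fcar E V) : term S V :=
  proj1_sig (constructive_indefinite_description _ (proj2_sig x)).

Lemma rep_spec {S : signature} E {V : Type} (x : @Fcar S E V) : proj1_sig x = teq E (rep E x).
Proof. unfold rep. destruct (constructive_indefinite_description _ _) as [t Ht]. exact Ht. Qed.

Lemma cls_rep {S : signature} E {V : Type} (x : @Fcar S E V) : cls E (rep E x) = x.
Proof. apply sig_eq. simpl. symmetry. apply rep_spec. Qed.

Lemma teq_rep_cls {S : signature} E {V : Type} (t : term S V) : teq E (rep E (cls E t)) t.
Proof.
  pose proof (rep_spec E (cls E t)) as H. simpl in H.
  assert (Htt : teq E t t) by (intros ? ? ?; reflexivity).
  rewrite H in Htt. exact Htt.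
Qed.

Lemma cls_eq {S : signature} E {V : Type} (s t : term S V) : teq E s t -> cls E s = cls E t.
Proof.
  intro H. apply sig_eq. simpl. apply functional_extensionality; intro r.
  apply propositional_extensionality. split; intros H' D HD env.
  - rewrite <- H by exact HD. apply H'; exact HD.
  - rewrite H by exact HD. apply H'; exact HD.
Qed.

Lemma cls_inj {S : signature} E {V : Type} (s t : term S V) : cls E s = cls E t -> teq E s t.
Proof.
  intro H. apply (f_equal (@proj1_sig _ _)) in H. simpl in H.
  assert (Hss : teq E s s) by (intros ? ? ?; reflexivity).
  rewrite H in Hss. intros D HD env. symmetry. apply Hss; exact HD.
Qed.

Definition Falg {S : signature} E (V : Type) : algebra S :=
  @Algebra S (Fcar E V) (fun o args => cls E (app o (fun i => rep E (args i)))).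

Lemma eval_F {S : signature} E {V W : Type} (σ : V -> term S W) t :
  eval (Falg E W) (fun v => cls E (σ v)) t = cls E (subst σ t).
Proof.
  induction t as [v|o args IH]; simpl; [reflexivity|].
  apply cls_eq. intros D HD env. simpl. f_equal. apply functional_extensionality; intro i.
  rewrite IH. apply teq_rep_cls; exact HD.
Qed.

Lemma F_variety {S : signature} E (V : Type) : in_variety E (@Falg S E V).
Proof.
  intros s t Hst env.
  replace env with (fun v => cls E (rep E (env v))) by (apply functional_extensionality; intro; apply cls_rep).
  rewrite !eval_F. apply cls_eq. intros D HD env'. rewrite !eval_subst. apply HD; exact Hst.
Qed.

Definition lift {S : signature} E {V : Type} (D : algebra S) (g : V -> D) (x : Fcar E V) : D :=
  eval D g (rep E x).

Lemma lift_cls {S : signature} E {V : Type} (D : algebra S) (g : V -> D) t :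
  in_variety E D -> lift E D g (cls E t) = eval D g t.
Proof. intro HD. apply teq_rep_cls; exact HD. Qed.

Lemma lift_hom {S : signature} E {V : Type} (D : algebra S) (g : V -> D) :
  in_variety E D -> @hom S (Falg E V) D (lift E D g).
Proof. intros HD o args. unfold lift at 1. simpl. rewrite (teq_rep_cls E _ D HD). reflexivity. Qed.

Lemma F_zero {S : signature} E c (V : Type) : zero c (@Falg S E V) = cls E (subst empty_elim c).
Proof.
  unfold zero. rewrite <- eval_F. apply eval_ext. intros [].
Qed.
Lemma proto_terms {S : signature} E c (Hp : pointed E c) (Hpr : protomodular E c) :
  exists (I : Type) (α : I -> term S bool) (θ : term S (I + unit)),
   (forall D : algebra S, in_variety E D -> forall (d : D) i, eval D (fun _ => d) (α i) = zero c D) /\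
   (forall D : algebra S, in_variety E D -> forall (d e : D),
      eval D (fun v => match v with inl i => eval D (fun b : bool => if b then d else e) (α i) | inr _ => e end) θ = d) /\
   (forall D : algebra S, in_variety E D -> forall (e : D),
      eval D (fun v => match v with inl _ => zero c D | inr _ => e end) θ = e).
Proof.
  set (B := @Falg S E bool). set (A0 := @Falg S E unit).
  assert (HB : in_variety E B) by apply F_variety.
  assert (HA0 : in_variety E A0) by apply F_variety.
  set (p := lift E A0 (fun _ : bool => cls E (var tt)) : B -> A0).
  set (s := lift E B (fun _ : unit => cls E (var false)) : A0 -> B).
  assert (Hph : hom p) by (apply lift_hom; exact HA0).
  assert (Hsh : hom s) by (apply lift_hom; exact HB).
  set (K := {k : B | p k = zero c A0}).
  set (envK := fun v : K + unit => match v with inl k => proj1_sig k | inr _ => cls E (var false) end : B).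
  set (G := fun b : B => exists th : term S (K + unit), b = eval B envK th).
  assert (HG : is_subalgebra B G).
  { intros o args Hargs.
    exists (app o (fun i => proj1_sig (constructive_indefinite_description _ (Hargs i)))).
    cbn [eval]. f_equal. apply functional_extensionality; intro i.
    destruct (constructive_indefinite_description _ (Hargs i)) as [th Hth]. exact Hth. }
  assert (Hs : forall a, G (s a)).
  { intro a. exists (subst (fun _ => var (inr tt)) (rep E a)).
    unfold s, lift. rewrite eval_subst. reflexivity. }
  assert (Hps : forall a, p (s a) = a).
  { intro a. rewrite <- (cls_rep E a). generalize (rep E a) as t. intro t.
    unfold s. rewrite (lift_cls E B _ _ HB).
    transitivity (p (cls E (subst (fun _ : unit => @var S bool false) t))).
    { f_equal. apply eval_F. }
    unfold p. rewrite (lift_cls E A0 _ _ HA0).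
    transitivity (cls E (subst (fun _ : bool => @var S unit tt) (subst (fun _ : unit => @var S bool false) t))).
    { apply eval_F. }
    apply cls_eq. intros D HD env. rewrite !eval_subst. apply eval_ext. intros []. reflexivity. }
  set (B' := subalg HG).
  set (s' := fun a : A0 => (exist G (s a) (Hs a) : B')).
  destruct (Hpr B' A0 B A0 (sub_variety E _ _ HG HB) HA0 HB HA0
    (fun b : B' => p (proj1_sig b)) s' p s (@proj1_sig _ _) (fun a => a))
    as [_ Hsurj].
  - intros o args. simpl. apply Hph.
  - intros o args. apply sig_eq. simpl. apply Hsh.
  - exact Hph.
  - exact Hsh.
  - intros o args. reflexivity.
  - intros o args. reflexivity.
  - intro a. simpl. apply Hps.
  - exact Hps.
  - intro; reflexivity.
  - intro; reflexivity.
  - auto.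
  - intro a; exists a; reflexivity.
  - intros k1 k2 _ _ H. apply sig_eq. exact H.
  - intros k' Hk'. exists (exist G k' (ex_intro _ (var (inl (exist _ k' Hk' : K))) eq_refl)).
    split; [exact Hk'|reflexivity].
  - destruct (Hsurj (cls E (var true))) as [[x [th Hth]] Hx]. simpl in Hx. rewrite Hx in Hth. clear Hx.
    set (σ := fun v : K + unit => match v with inl k => rep E (proj1_sig k) | inr _ => @var S bool false end).
    assert (HenvK : envK = fun v => cls E (σ v)).
    { apply functional_extensionality. intros [k|u]; simpl; [symmetry; apply cls_rep|reflexivity]. }
    rewrite HenvK in Hth; unfold B in Hth; rewrite eval_F in Hth.
    pose proof (cls_inj _ _ _ Hth) as Hteq.
    exists K, (fun k => rep E (proj1_sig k)), th. split; [|split].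
    + intros D HD d k. pose proof (proj2_sig k) as Hk. cbv beta in Hk.
      idtac. rewrite <- (cls_rep E (proj1_sig k)) in Hk. unfold p in Hk.
      rewrite (lift_cls E A0 _ _ HA0) in Hk.
      rewrite (eval_F E (fun _ : bool => @var S unit tt)) in Hk.
      unfold A0 in Hk; rewrite F_zero in Hk. apply cls_inj in Hk.
      specialize (Hk D HD (fun _ => d)). rewrite !eval_subst in Hk.
      etransitivity; [|etransitivity; [exact Hk|]]; [reflexivity|]. unfold zero. apply eval_ext. intros [].
    + intros D HD d e. specialize (Hteq D HD (fun b : bool => if b then d else e)).
      etransitivity; [|exact (eq_sym Hteq)]. rewrite eval_subst. apply eval_ext. intros [k|u]; reflexivity.
    + intros D HD e. apply (f_equal p) in Hth.
      rewrite <- eval_F, <- HenvK in Hth.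
      unfold p at 1 in Hth. rewrite (lift_cls E A0 _ _ HA0) in Hth. simpl in Hth.
      rewrite (eval_hom _ _ p _ _ Hph) in Hth.
      set (σ' := fun v : K + unit => match v with inl _ => @subst S Empty_set unit empty_elim c | inr _ => @var S unit tt end).
      assert (Hpe : (fun v => p (envK v)) = fun v => cls E (σ' v)).
      { apply functional_extensionality. intros [k|u]; simpl.
        - etransitivity; [exact (proj2_sig k)|]. apply F_zero.
        - unfold p. rewrite (lift_cls E A0 _ _ HA0). reflexivity. }
      rewrite Hpe in Hth. unfold A0 in Hth. rewrite eval_F in Hth. apply cls_inj in Hth.
      specialize (Hth D HD (fun _ => e)). simpl in Hth. etransitivity; [|exact (eq_sym Hth)]. rewrite eval_subst.
      apply eval_ext. intros [k|u]; simpl; [symmetry; apply eval_zc|reflexivity].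
Qed.

Fixpoint occurs {S : signature} {V : Type} (v : V) (t : term S V) : Prop :=
  match t with var w => w = v | app o args => exists i, occurs v (args i) end.

Lemma eval_occ_ext {S : signature} {V : Type} (D : algebra S) (env1 env2 : V -> D) t :
  (forall v, occurs v t -> env1 v = env2 v) -> eval D env1 t = eval D env2 t.
Proof.
  induction t as [w|o args IH]; simpl; intro H.
  - apply H. reflexivity.
  - f_equal. apply functional_extensionality; intro i. apply IH.
    intros v Hv. apply H. exists i; exact Hv.
Qed.

Lemma fin_lists {V : Type} (n : nat) (P : fin n -> V -> Prop) :
  (forall i, exists l, forall v, P i v -> List.In v l) -> exists l, forall i v, P i v -> List.In v l.
Proof.
  induction n as [|n IHn]; intro H.
  - exists nil. intros [i Hi]. lia.
  - set (last := exist (fun i => i < S n) n (le_n (S n)) : fin (S n)).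
    destruct (H last) as [l1 Hl1].
    destruct (IHn (fun (j : fin n) v => P (exist (fun i => i < S n) (proj1_sig j) (le_S _ _ (proj2_sig j))) v))
      as [l2 Hl2].
    { intro j. apply H. }
    exists (l1 ++ l2)%list. intros [i Hi] v Hv. apply List.in_or_app.
    destruct (PeanoNat.Nat.eq_dec i n) as [->|Hne].
    + left. apply Hl1. replace last with (exist (fun i => i < S n) n Hi) by (apply sig_eq; reflexivity).
      exact Hv.
    + right. assert (Hi' : i < n) by lia. apply (Hl2 (exist _ i Hi')). simpl.
      replace (le_S (S i) n Hi') with Hi by apply proof_irrelevance. exact Hv.
Qed.

Lemma occ_list {S : signature} {V : Type} (t : term S V) : exists l, forall v, occurs v t -> List.In v l.
Proof.
  induction t as [w|o args IH].
  - exists (w :: nil)%list. intros v Hv. simpl in Hv. subst. left; reflexivity.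
  - destruct (fin_lists _ (fun i v => occurs v (args i)) IH) as [l Hl].
    exists l. intros v [i Hi]. exact (Hl i v Hi).
Qed.

Lemma finitize {S : signature} {V : Type} (v0 : V) (t : term S V) :
  exists (N : nat) (t' : term S (fin N)) (δ : fin N -> V),
    forall (D : algebra S) (env : V -> D), eval D env t = eval D (fun i => env (δ i)) t'.
Proof.
  destruct (occ_list t) as [l Hl].
  assert (Hidx : forall v, exists i : fin (Datatypes.S (length l)), List.In v l -> List.nth (proj1_sig i) l v0 = v).
  { intro v. destruct (classic (List.In v l)) as [Hin|Hnin].
    - destruct (List.In_nth l v v0 Hin) as [k [Hk Hnth]].
      exists (exist (fun i => i < Datatypes.S (length l)) k (le_S _ _ Hk)). intros _; exact Hnth.
    - exists (exist (fun i => i < Datatypes.S (length l)) 0 (PeanoNat.Nat.lt_0_succ _)). intro; contradiction. }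
  set (idx := fun v => proj1_sig (constructive_indefinite_description _ (Hidx v))).
  exists (Datatypes.S (length l)), (subst (fun v => var (idx v)) t), (fun i => List.nth (proj1_sig i) l v0).
  intros D env. rewrite eval_subst. apply eval_occ_ext. intros v Hv. simpl. unfold idx.
  destruct (constructive_indefinite_description _ (Hidx v)) as [i Hi]. simpl.
  rewrite (Hi (Hl v Hv)). reflexivity.
Qed.

Lemma cop3_gen {S : signature} E (A1 A2 A3 Q : algebra S) q1 q2 q3 :
  is_coproduct3 E A1 A2 A3 Q q1 q2 q3 ->
  forall z : Q, exists t : term S ((A1 + A2) + A3),
    z = eval Q (fun v => match v with inl (inl a) => q1 a | inl (inr b) => q2 b | inr x => q3 x end) t.
Proof.
  intros [HQv [Hq1 [Hq2 [Hq3 HQu]]]] z.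
  set (env0 := fun v : (A1 + A2) + A3 => match v with inl (inl a) => q1 a | inl (inr b) => q2 b | inr x => q3 x end).
  set (G := fun z : Q => exists t, z = eval Q env0 t).
  assert (HG : is_subalgebra Q G).
  { intros o args Hargs.
    exists (app o (fun i => proj1_sig (constructive_indefinite_description _ (Hargs i)))).
    cbn [eval]. f_equal. apply functional_extensionality; intro i.
    destruct (constructive_indefinite_description _ (Hargs i)) as [th Hth]. exact Hth. }
  set (Q' := subalg HG).
  set (g1 := fun a => exist G (q1 a) (ex_intro _ (var (inl (inl a))) eq_refl) : Q').
  set (g2 := fun a => exist G (q2 a) (ex_intro _ (var (inl (inr a))) eq_refl) : Q').
  set (g3 := fun a => exist G (q3 a) (ex_intro _ (var (inr a)) eq_refl) : Q').
  destruct (HQu Q' (sub_variety E _ _ HG HQv) g1 g2 g3) as [h [Hh [Hh1 [Hh2 [Hh3 _]]]]].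
  - intros o args; apply sig_eq; apply Hq1.
  - intros o args; apply sig_eq; apply Hq2.
  - intros o args; apply sig_eq; apply Hq3.
  - destruct (HQu Q HQv q1 q2 q3 Hq1 Hq2 Hq3) as [h0 [_ [_ [_ [_ Hu]]]]].
    assert (E1 : (fun z => z) z = h0 z) by (apply (Hu (fun z => z)); [intros o args; reflexivity|reflexivity..]).
    assert (E2 : (fun z => proj1_sig (h z)) z = h0 z).
    { apply (Hu (fun z => proj1_sig (h z))).
      - intros o args. rewrite Hh. reflexivity.
      - intro x. rewrite Hh1. reflexivity.
      - intro x. rewrite Hh2. reflexivity.
      - intro x. rewrite Hh3. reflexivity. }
    simpl in E1, E2. rewrite E1, <- E2. exact (proj2_sig (h z)).
Qed.

Definition bin {S : signature} {W : Type} (β : term S bool) (p q : term S W) : term S W :=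
  subst (fun b : bool => if b then p else q) β.

Lemma eval_bin {S : signature} {W : Type} (D : algebra S) (env : W -> D) β p q :
  eval D env (bin β p q) = eval D (fun b : bool => if b then eval D env p else eval D env q) β.
Proof. unfold bin. rewrite eval_subst. apply eval_ext. intros [|]; reflexivity. Qed.

Lemma build_comm {S : signature} E c (Hp : pointed E c) (Hpr : protomodular E c)
  (A : algebra S) (HA : in_variety E A) (k m n : nat) (t : term S ((fin k + fin m) + fin n))
  (ew : fin k -> A) (ex : fin m -> A) (ey : fin n -> A) :
  eval A (env3 ew ex (fun _ => zero c A)) t = zero c A ->
  eval A (env3 ew (fun _ => zero c A) ey) t = zero c A ->
  eval A (env3 ew (fun _ => zero c A) (fun _ => zero c A)) t = zero c A ->
  exists T, commutator_term E c T /\ eval A (env3 ew ex ey) T = eval A (env3 ew ex ey) t.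
Proof.
  intros Hx0 H0y H00.
  destruct (proto_terms E c Hp Hpr) as (I & α & θ & P1 & P2 & P3).
  set (zc := @subst S Empty_set ((fin k + fin m) + fin n) empty_elim c).
  set (sx0 := fun v : (fin k + fin m) + fin n => match v with inr _ => zc | _ => var v end).
  set (s0y := fun v : (fin k + fin m) + fin n => match v with inl (inr _) => zc | _ => var v end).
  set (sI := fun i => bin (α i) t (subst s0y t)).
  set (r := fun i j => bin (α j) (sI i) (subst sx0 (sI i))).
  set (inner := fun i => subst (fun v => match v with inl j => r i j | inr _ => zc end) θ).
  set (T := subst (fun v => match v with inl i => inner i | inr _ => zc end) θ).
  assert (Ex0 : forall (D : algebra S) env s, eval D env (subst sx0 s)
     = eval D (fun v => match v with inr _ => zero c D | _ => env v end) s).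
  { intros D env s. rewrite eval_subst. apply eval_ext.
    intros [[i|i]|i]; cbv beta iota; [reflexivity|reflexivity|apply eval_zc]. }
  assert (E0y : forall (D : algebra S) env s, eval D env (subst s0y s)
     = eval D (fun v => match v with inl (inr _) => zero c D | _ => env v end) s).
  { intros D env s. rewrite eval_subst. apply eval_ext.
    intros [[i|i]|i]; cbv beta iota; [reflexivity|apply eval_zc|reflexivity]. }
  assert (HT : forall D, in_variety E D -> forall env,
            (forall i j, eval D env (r i j) = zero c D) -> eval D env T = zero c D).
  { intros D HD env Hr. unfold T. rewrite eval_subst.
    transitivity (eval D (fun v : I + unit => match v with inl _ => zero c D | inr _ => zero c D end) θ).
    { apply eval_ext. intros [i|u]; cbv beta iota.
      - unfold inner. rewrite eval_subst.
        transitivity (eval D (fun v : I + unit => match v with inl _ => zero c D | inr _ => zero c D end) θ).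
        + apply eval_ext. intros [j|u']; cbv beta iota; [apply Hr|apply eval_zc].
        + apply P3; exact HD.
      - apply eval_zc. }
    apply P3; exact HD. }
  assert (Hr0 : forall D, in_variety E D -> forall env i j,
     eval D env (sI i) = eval D env (subst sx0 (sI i)) -> eval D env (r i j) = zero c D).
  { intros D HD env i j H. unfold r. rewrite eval_bin, <- H.
    transitivity (eval D (fun _ => eval D env (sI i)) (α j)).
    - apply eval_ext; intros []; reflexivity.
    - apply P1; exact HD. }
  assert (HsI0 : forall D, in_variety E D -> forall env i,
     eval D env t = eval D env (subst s0y t) -> eval D env (sI i) = zero c D).
  { intros D HD env i H. unfold sI. rewrite eval_bin, <- H.
    transitivity (eval D (fun _ => eval D env t) (α i)).
    - apply eval_ext; intros []; reflexivity.
    - apply P1; exact HD. }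
  exists T. split.
  - intros D HD. split.
    + intros ew' ey'. apply HT; [exact HD|]. intros i j. apply Hr0; [exact HD|].
      rewrite Ex0. rewrite (HsI0 D HD _ i), (HsI0 D HD _ i); [reflexivity| |].
      all: rewrite E0y; apply eval_ext; intros [[i'|i']|i']; reflexivity.
    + intros ew' ex'. apply HT; [exact HD|]. intros i j. apply Hr0; [exact HD|].
      rewrite Ex0. apply eval_ext. intros [[i'|i']|i']; reflexivity.
  - set (envs := env3 ew ex ey).
    assert (Hs0 : forall i, eval A envs (subst sx0 (sI i)) = zero c A).
    { intro i. rewrite Ex0. unfold sI. rewrite eval_bin.
      transitivity (eval A (fun _ : bool => zero c A) (α i)); [|apply P1; exact HA].
      apply eval_ext. intros [|].
      - etransitivity; [|exact Hx0]. apply eval_ext. intros [[?|?]|?]; reflexivity.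
      - rewrite E0y. etransitivity; [|exact H00]. apply eval_ext. intros [[?|?]|?]; reflexivity. }
    assert (HsIv : forall i, eval A envs (sI i)
       = eval A (fun b : bool => if b then eval A envs t else zero c A) (α i)).
    { intro i. unfold sI. rewrite eval_bin. apply eval_ext. intros [|]; [reflexivity|].
      rewrite E0y. etransitivity; [|exact H0y]. apply eval_ext. intros [[?|?]|?]; reflexivity. }
    assert (Hinner : forall i, eval A envs (inner i) = eval A envs (sI i)).
    { intro i. unfold inner. rewrite eval_subst.
      etransitivity; [|apply (P2 A HA (eval A envs (sI i)) (zero c A))].
      apply eval_ext. intros [j|u]; cbv beta iota.
      - unfold r. rewrite eval_bin. apply eval_ext. intros [|]; [reflexivity|apply Hs0].
      - apply eval_zc. }
    unfold T. rewrite eval_subst.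
    etransitivity; [|apply (P2 A HA (eval A envs t) (zero c A))].
    apply eval_ext. intros [i|u]; cbv beta iota.
    + rewrite Hinner. apply HsIv.
    + apply eval_zc.
Qed.

Theorem theorem7p6
  (S : signature) (E : term S nat -> term S nat -> Prop) (c : term S Empty_set)
  (Hpointed : pointed E c) (Hproto : protomodular E c)
  (A : algebra S) (HA : in_variety E A)
  (X Y : A -> Prop) (HX : is_subalgebra A X) (HY : is_subalgebra A Y)
  (* the coproduct A + X + Y with injections *)
  (Q : algebra S) (qA : A -> Q) (qX : subalg HX -> Q) (qY : subalg HY -> Q)
  (HQ : is_coproduct3 E A (subalg HX) (subalg HY) Q qA qX qY)
  (* the coproducts A + X and A + Y *)
  (P1 : algebra S) (pA : A -> P1) (pX : subalg HX -> P1)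
  (HP1 : is_coproduct2 E A (subalg HX) P1 pA pX)
  (P2 : algebra S) (rA : A -> P2) (rY : subalg HY -> P2)
  (HP2 : is_coproduct2 E A (subalg HY) P2 rA rY)
  (* [iota1, iota2, 0] : A + X + Y -> A + X *)
  (phi1 : Q -> P1) (Hphi1 : hom phi1 /\ (forall a, phi1 (qA a) = pA a) /\
       (forall x, phi1 (qX x) = pX x) /\ (forall y, phi1 (qY y) = zero c P1))
  (* [iota1, 0, iota2] : A + X + Y -> A + Y *)
  (phi2 : Q -> P2) (Hphi2 : hom phi2 /\ (forall a, phi2 (qA a) = rA a) /\
       (forall x, phi2 (qX x) = zero c P2) /\ (forall y, phi2 (qY y) = rY y))
  (* [1_A, x, y] : A + X + Y -> A *)
  (psi : Q -> A) (Hpsi : hom psi /\ (forall a, psi (qA a) = a) /\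
       (forall x, psi (qX x) = proj1_sig x) /\ (forall y, psi (qY y) = proj1_sig y)) :
  forall a : A,
    comm_CA E c A X Y a <->
    exists u : Q, (phi1 u, phi2 u) = (zero c P1, zero c P2) /\ psi u = a.
Proof.
  destruct Hphi1 as [Hp1h [Hp1A [Hp1X Hp1Y]]].
  destruct Hphi2 as [Hp2h [Hp2A [Hp2X Hp2Y]]].
  destruct Hpsi as [Hpsh [HpsA [HpsX HpsY]]].
  destruct HP1 as [HP1v [HpAh [HpXh HP1u]]].
  destruct HP2 as [HP2v [HrAh [HrYh HP2u]]].
  intro a. split.
  - intros (k & m & n & t & Hct & ew & ex & ey & HXe & HYe & ->).
    set (exs := fun i => exist X (ex i) (HXe i) : subalg HX).
    set (eys := fun i => exist Y (ey i) (HYe i) : subalg HY).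
    exists (eval Q (env3 (fun i => qA (ew i)) (fun i => qX (exs i)) (fun i => qY (eys i))) t).
    split.
    + f_equal.
      * rewrite (eval_hom _ _ phi1 _ _ Hp1h).
        etransitivity; [|exact (proj2 (Hct P1 HP1v) (fun i => pA (ew i)) (fun i => pX (exs i)))].
        apply eval_ext. intros [[i|i]|i]; simpl; auto.
      * rewrite (eval_hom _ _ phi2 _ _ Hp2h).
        etransitivity; [|exact (proj1 (Hct P2 HP2v) (fun i => rA (ew i)) (fun i => rY (eys i)))].
        apply eval_ext. intros [[i|i]|i]; simpl; auto.
    + rewrite (eval_hom _ _ psi _ _ Hpsh). apply eval_ext. intros [[i|i]|i]; simpl; auto.
  - intros [u [Hu Hpa]]. injection Hu as Hu1 Hu2.
    destruct (cop3_gen E _ _ _ _ _ _ _ HQ u) as [t0 Ht0].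
    destruct (finitize (inl (inl (zero c A))) t0) as (N & t1 & δ & Hfin).
    set (x0 := exist X (zero c A) (zero_in_sub A X HX c) : subalg HX).
    set (y0 := exist Y (zero c A) (zero_in_sub A Y HY c) : subalg HY).
    set (ew := fun i => match δ i with inl (inl a) => a | _ => zero c A end).
    set (exs := fun i => match δ i with inl (inr x) => x | _ => x0 end).
    set (eys := fun i => match δ i with inr y => y | _ => y0 end).
    set (ρ := fun i => match δ i with inl (inl _) => inl (inl i) | inl (inr _) => inl (inr i)
                                   | inr _ => inr i end : (fin N + fin N) + fin N).
    set (t2 := subst (fun i => var (ρ i)) t1).
    assert (Key : forall (D : algebra S) (env : ((A + subalg HX) + subalg HY) -> D),
       eval D env t0 = eval D (env3 (fun i => env (inl (inl (ew i)))) (fun i => env (inl (inr (exs i))))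
                                    (fun i => env (inr (eys i)))) t2).
    { intros D env. rewrite Hfin. unfold t2. rewrite eval_subst. apply eval_ext. intro i.
      unfold ρ. destruct (δ i) as [[?|?]|?] eqn:Hd; simpl; unfold env3, ew, exs, eys; cbv beta; rewrite Hd; reflexivity. }
    set (ex := fun i => proj1_sig (exs i)).
    set (ey := fun i => proj1_sig (eys i)).
    assert (Ha : a = eval A (env3 ew ex ey) t2).
    { rewrite <- Hpa, Ht0, (eval_hom _ _ psi _ _ Hpsh), Key.
      apply eval_ext. intros [[i|i]|i]; simpl; auto. }
    destruct (HP1u A HA (fun a => a) (fun x : subalg HX => proj1_sig x)) as [h1 [Hh1 [Hh1A [Hh1X _]]]];
      [intros o args; reflexivity..|].
    destruct (HP2u A HA (fun a => a) (fun x : subalg HY => proj1_sig x)) as [h2 [Hh2 [Hh2A [Hh2Y _]]]];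
      [intros o args; reflexivity..|].
    destruct (HP1u A HA (fun a => a) (fun x : subalg HX => zero c A)) as [h3 [Hh3 [Hh3A [Hh3X _]]]];
      [intros o args; reflexivity|apply (const_zero_hom E c Hpointed); exact HA|].
    assert (Hx0 : eval A (env3 ew ex (fun _ => zero c A)) t2 = zero c A).
    { etransitivity; [|exact (hom_zero c _ _ h1 Hh1)]. rewrite <- Hu1, Ht0,
        (eval_hom _ _ phi1 _ _ Hp1h), (eval_hom _ _ h1 _ _ Hh1), Key.
      symmetry. apply eval_ext. intros [[i|i]|i]; simpl.
      - rewrite Hp1A, Hh1A. reflexivity.
      - rewrite Hp1X, Hh1X. reflexivity.
      - rewrite Hp1Y. apply (hom_zero c _ _ h1 Hh1). }
    assert (H0y : eval A (env3 ew (fun _ => zero c A) ey) t2 = zero c A).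
    { etransitivity; [|exact (hom_zero c _ _ h2 Hh2)]. rewrite <- Hu2, Ht0,
        (eval_hom _ _ phi2 _ _ Hp2h), (eval_hom _ _ h2 _ _ Hh2), Key.
      symmetry. apply eval_ext. intros [[i|i]|i]; simpl.
      - rewrite Hp2A, Hh2A. reflexivity.
      - rewrite Hp2X. apply (hom_zero c _ _ h2 Hh2).
      - rewrite Hp2Y, Hh2Y. reflexivity. }
    assert (H00 : eval A (env3 ew (fun _ => zero c A) (fun _ => zero c A)) t2 = zero c A).
    { etransitivity; [|exact (hom_zero c _ _ h3 Hh3)]. rewrite <- Hu1, Ht0,
        (eval_hom _ _ phi1 _ _ Hp1h), (eval_hom _ _ h3 _ _ Hh3), Key.
      symmetry. apply eval_ext. intros [[i|i]|i]; simpl.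
      - rewrite Hp1A, Hh3A. reflexivity.
      - rewrite Hp1X, Hh3X. reflexivity.
      - rewrite Hp1Y. apply (hom_zero c _ _ h3 Hh3). }
    destruct (build_comm E c Hpointed Hproto A HA N N N t2 ew ex ey Hx0 H0y H00) as [T [HT HTv]].
    exists N, N, N, T. split; [exact HT|]. exists ew, ex, ey.
    split; [intro i; exact (proj2_sig (exs i))|].
    split; [intro j; exact (proj2_sig (eys j))|].
    rewrite HTv. exact Ha.
Qed.
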